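(* Let $G=(V,E)$ be a simple graph with adjacency matrix $A$, let $x$ be a solution of $\mathrm{LCP}(A+I,-\mathbf{e})$, and let $S$ be a maximal independent set of $G$ with $S\subseteq\sigma(x)$. Then $\mathbf{e}^\top x\leq |S|$.
   Context: $x$ solves $\mathrm{LCP}(A+I,-\mathbf{e})$ iff $x\geq 0$, $(A+I)x\geq\mathbf{e}$ and $x^\top((A+I)x-\mathbf{e})=0$, where $I$ is the identity and $\mathbf{e}$ the all-ones vector. $\sigma(x):=\{i\in V\mid x_i>0\}$ is the support of $x$. *)

(* Defs.v *)
From mathcomp Require Import all_boot all_order all_algebra.
Set Implicit Arguments. Unset Strict Implicit. Unset Printing Implicit Defensive.
Import Order.TTheory GRing.Theory Num.Theory.
Local Open Scope ring_scope.

Definition simple_graph n (e : rel 'I_n) : Prop :=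
  symmetric e /\ irreflexive e.

Definition adjmx (R : nzRingType) n (e : rel 'I_n) : 'M[R]_n :=
  \matrix_(i, j) (e i j)%:R.

Definition onesv (R : nzRingType) n : 'cV[R]_n := const_mx 1.

Definition LCP_sol (R : numDomainType) n (M : 'M[R]_n) (q x : 'cV[R]_n) : Prop :=
  (forall i, 0 <= x i 0) /\
  (forall i, 0 <= (M *m x + q) i 0) /\
  (x^T *m (M *m x + q)) 0 0 = 0.

Definition supp (R : numDomainType) n (x : 'cV[R]_n) : {set 'I_n} :=
  [set i | 0 < x i 0].

Definition independent n (e : rel 'I_n) (S : {set 'I_n}) : bool :=
  [forall i in S, forall j in S, ~~ e i j].

Definition maximal_independent n (e : rel 'I_n) (S : {set 'I_n}) : Prop :=
  independent e S /\
  (forall T : {set 'I_n}, independent e T -> S \subset T -> T = S).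

(* Main.v *)
Require Import Defs.
From mathcomp Require Import all_boot all_order all_algebra.
Import Order.TTheory GRing.Theory Num.Theory.
Local Open Scope ring_scope.

Theorem lemma3 (R : realFieldType) (n : nat) (e : rel 'I_n) (x : 'cV[R]_n)
  (S : {set 'I_n}) :
  simple_graph e ->
  LCP_sol (adjmx R e + 1%:M) (- onesv R n) x ->
  maximal_independent e S ->
  S \subset supp x ->
  ((onesv R n)^T *m x) 0 0 <= #|S|%:R.
Proof.
move=> [esym eirr] [x0 [y0 comp]] [indS maxS] sub.
set M := adjmx R e + 1%:M.
have ME : forall i j, M i j = (e i j)%:R + (i == j)%:R.
  by move=> i j; rewrite !mxE.
have Mge0 : forall i j, 0 <= M i j.
  by move=> i j; rewrite ME addr_ge0 ?ler0n.
have comp' : forall i, x i 0 * (M *m x - onesv R n) i 0 = 0.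
  move=> i; move: comp; rewrite mxE => /eqP; rewrite psumr_eq0.
    move=> /allP /(_ i) H; apply/eqP; move: (H (mem_index_enum i)).
    by rewrite /= !mxE.
  move=> j _; rewrite !mxE; apply: mulr_ge0 => //.
  by move: (y0 j); rewrite !mxE.
have Mx1 : forall s, s \in S -> (M *m x) s 0 = 1.
  move=> s sS; have xs : 0 < x s 0 by move: (subsetP sub s sS); rewrite inE.
  move: (comp' s) => /eqP; rewrite mulf_eq0 (gt_eqF xs) /= !mxE subr_eq0.
  by move=> /eqP ->.
have cover : forall v, exists2 s, s \in S & (e s v || (s == v)).
  move=> v; case vS: (v \in S); first by exists v => //; rewrite eqxx orbT.
  case: (pickP [pred s | (s \in S) && e s v]) => [s /andP [sS esv] | none].
    by exists s => //; rewrite esv.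
  have : independent e (v |: S).
    apply/forallP => i; apply/implyP; rewrite in_setU1 => /orP [/eqP -> | iS];
    apply/forallP => j; apply/implyP; rewrite in_setU1 => /orP [/eqP -> | jS].
    - by rewrite eirr.
    - by rewrite esym; move: (none j); rewrite /= jS /= => ->.
    - by move: (none i) => /=; rewrite iS /= => ->.
    - by move: indS => /forallP /(_ i) /implyP /(_ iS) /forallP /(_ j) /implyP /(_ jS).
  move=> /maxS /(_ (subsetUr _ _)) H.
  by move: vS; rewrite -H setU11.
have -> : ((onesv R n)^T *m x) 0 0 = \sum_v x v 0.
  by rewrite mxE; apply: eq_bigr => v _; rewrite !mxE mul1r.
apply: (le_trans (y := \sum_v \sum_(s in S) M s v * x v 0)).
  apply: ler_sum => v _; case: (cover v) => s sS hs.
  rewrite (bigD1 s) //= -[leLHS]addr0; apply: lerD.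
    rewrite -[leLHS]mul1r ler_wpM2r //.
    rewrite ME; case/orP: hs => [-> | ->]; first by rewrite lerDl ler0n.
    by rewrite lerDr ler0n.
  by apply: sumr_ge0 => i _; apply: mulr_ge0.
rewrite exchange_big /=.
rewrite (eq_bigr (fun _ => 1)); first by rewrite sumr_const.
by move=> s sS; rewrite -(Mx1 s sS) mxE.
Qed.
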